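(* Consider the multi-user private information retrieval (MUPIR) setting with $N \ge 1$ non-curious or computationally-limited databases and $U \ge 1$ trustworthy users, with $K$ messages, and let $S = N + U - 1$ denote the number of information sources. Then the capacity (supremum of achievable rates under the privacy constraints) of this setting is $$C_{\text{MUPIR}} = \Big(1 + \frac{1}{S} + \frac{1}{S^2} + \cdots + \frac{1}{S^{K-1}}\Big)^{-1}.$$
   Context: Setting (MUPIR): $N$ replicated, non-communicating databases each store the same $K$ independent messages $W_1,\dots,W_K$, each of $L$ bits, so $H(W_k)=L$ for all $k\in[K]=\{1,\dots,K\}$ and $H(W_{1:K})=KL$. A central user wishes to retrieve $W_\theta$, $\theta\in[K]$, with the help of the other $U-1$ users. The $S=N+U-1$ sources are the $N$ databases and the $U-1$ other users. The central user generates queries $Q^{[\theta]}_s$, $s\in[S]$, one per source; a query sent to a database is answered directly by that database with $A^{[\theta]}_s$, while a query sent to another user is forwarded by that user to some database and the resulting answer $A^{[\theta]}_s$ is returned to the central user. Queries are independent of the messages: $I(Q^{[k]}_{1:S};W_{1:K})=0$ for all $k\in[K]$. Privacy: for every source $s$, $(Q^{[1]}_s,A^{[1]}_s,W_{1:K})$ and $(Q^{[k]}_s,A^{[k]}_s,W_{1:K})$ are identically distributed for every $k\in[K]$. Correctness: $W_\theta$ is recoverable from all answers and queries. Writing $\sum Q$ for $Q^{[\theta]}_{1:S}$, the rate is $R = L/D = H(W_\theta)/\big(S\,H(A^{[\theta]}_1 \mid \sum Q)\big)$, where $D$ is the total number of downloaded bits; upload cost is ignored. ''Computationally-limited'' means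 a database does not cross-reference the queries of different users (it analyzes only the queries of a single user at a time). *)

(* Defs.v *)
From HB Require Import structures.
From mathcomp Require Import all_boot all_order all_algebra.
From mathcomp Require Import reals exp.
Unset Implicit Arguments.
Unset Strict Implicit.
Unset Printing Implicit Defensive.
Import Order.TTheory GRing.Theory Num.Theory.
Local Open Scope ring_scope.

Definition log2 {R : realType} (x : R) : R := ln x / ln 2.

Definition prob {R : realType} {O : finType} (P : O -> R) (E : pred O) : R :=
  \sum_(o | E o) P o.

Definition entropy {R : realType} {O : finType} (P : O -> R) {T : eqType}
  (X : O -> T) : R :=
  - \sum_(o : O) P o * log2 (prob P (fun o' => X o' == X o)).

Definition cond_entropy {R : realType} {O : finType} (P : O -> R)
  {T T' : eqType} (X : O -> T) (Y : O -> T') : R :=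
  entropy P (fun o => (X o, Y o)) - entropy P Y.

(* K messages of L bits each; S = N + U - 1 information sources.
   The central user's private randomness F ranges over the finite type [rnd]
   with distribution [prF]; the query to source s for desired index th is
   [query th s F] (hence queries are independent of the messages); the answer
   returned by source s is a deterministic function of its query and of the
   messages (a database answers a query it receives directly or forwarded by
   another user, looking only at that single query). *)
Record pir_scheme (R : realType) (K S L : nat) := PirScheme {
  rnd : finType;
  prF : rnd -> R;
  qry : eqType;
  ans : eqType;
  query : 'I_K -> 'I_S -> rnd -> qry;
  answer : 'I_S -> qry -> {ffun 'I_K -> L.-tuple bool} -> ans
}.
Arguments rnd {R K S L} _.
Arguments prF {R K S L} _ _.
Arguments qry {R K S L} _.
Arguments ans {R K S L} _.
Arguments query {R K S L} _ _ _ _.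
Arguments answer {R K S L} _ _ _ _.

(* joint law: F ~ prF, independent of the messages W_{1:K}, which are
   i.i.d. uniform on L-bit strings *)
Definition P0 {R : realType} {K S L : nat} (sc : pir_scheme R K S L)
  (o : (rnd sc * {ffun 'I_K -> L.-tuple bool})%type) : R :=
  prF sc o.1 / 2 ^+ (K * L).

Definition Q {R : realType} {K S L : nat} (sc : pir_scheme R K S L)
  (th : 'I_K) (s : 'I_S) (o : (rnd sc * {ffun 'I_K -> L.-tuple bool})%type) :=
  query sc th s o.1.

Definition A {R : realType} {K S L : nat} (sc : pir_scheme R K S L)
  (th : 'I_K) (s : 'I_S) (o : (rnd sc * {ffun 'I_K -> L.-tuple bool})%type) :=
  answer sc s (Q sc th s o) o.2.

Definition Qall {R : realType} {K S L : nat} (sc : pir_scheme R K S L)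
  (th : 'I_K) (o : (rnd sc * {ffun 'I_K -> L.-tuple bool})%type)
  : {ffun 'I_S -> qry sc} := [ffun s => Q sc th s o].

Definition Aall {R : realType} {K S L : nat} (sc : pir_scheme R K S L)
  (th : 'I_K) (o : (rnd sc * {ffun 'I_K -> L.-tuple bool})%type)
  : {ffun 'I_S -> ans sc} := [ffun s => A sc th s o].

Definition valid_dist {R : realType} {K S L : nat} (sc : pir_scheme R K S L) :=
  (forall f, 0 <= prF sc f) /\ \sum_(f : rnd sc) prF sc f = 1.

Definition correct {R : realType} {K S L : nat} (sc : pir_scheme R K S L) :=
  forall th : 'I_K,
  exists dec : {ffun 'I_S -> qry sc} -> {ffun 'I_S -> ans sc} -> L.-tuple bool,
  forall o, 0 < P0 sc o -> dec (Qall sc th o) (Aall sc th o) = o.2 th.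

Definition private {R : realType} {K S L : nat} (sc : pir_scheme R K S L) :=
  forall (s : 'I_S) (k k' : 'I_K) (q : qry sc) (a : ans sc)
         (w : {ffun 'I_K -> L.-tuple bool}),
  prob (P0 sc) (fun o => [&& Q sc k s o == q, A sc k s o == a & o.2 == w]) =
  prob (P0 sc) (fun o => [&& Q sc k' s o == q, A sc k' s o == a & o.2 == w]).

Definition download {R : realType} {K S L : nat} (sc : pir_scheme R K S L)
  (th : 'I_K) : R :=
  \sum_(s < S) cond_entropy (P0 sc) (A sc th s) (Qall sc th).

Definition achievable {R : realType} (K S : nat) (r : R) : Prop :=
  exists (L : nat) (sc : pir_scheme R K S L),
    [/\ (0 < L)%N, valid_dist sc, correct sc, private sc &
        forall th : 'I_K, r * download sc th <= L%:R].

Definition is_capacity {R : realType} (K S : nat) (C : R) : Prop :=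
  (forall r : R, achievable K S r -> r <= C) /\
  (forall e : R, 0 < e -> exists r : R, achievable K S r /\ C - e < r).

(* Main.v *)
Require Import Defs.
From HB Require Import structures.
From mathcomp Require Import all_boot all_order all_algebra.
From mathcomp Require Import reals exp.
From mathcomp Require Import ring lra.
Import Order.TTheory GRing.Theory Num.Theory.
Local Open Scope ring_scope.
Section Info.
Variable R : realType.
Variable O : finType.
Variable P : O -> R.
Hypothesis Pge0 : forall o, 0 <= P o.

Definition pr {T : eqType} (V : O -> T) (o : O) := prob P (fun o' => V o' == V o).

Lemma Pcase o : P o = 0 \/ 0 < P o.
Proof. by have := Pge0 o; rewrite le0r => /orP[/eqP->|->]; [left|right]. Qed.

Lemma prob_ge0 (E : pred O) : 0 <= prob P E.
Proof. by apply: sumr_ge0 => o _; exact: Pge0. Qed.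

Lemma prob_sub (E1 E2 : pred O) : (forall o, E1 o -> E2 o) -> prob P E1 <= prob P E2.
Proof.
move=> h; rewrite /prob [leLHS]big_mkcond [leRHS]big_mkcond /=.
apply: ler_sum => o _; case E: (E1 o); first by rewrite h.
by case: (E2 o).
Qed.

Lemma pr_ge (T : eqType) (V : O -> T) o : P o <= pr V o.
Proof.
rewrite /pr /prob (bigD1 o) //= lerDl.
by apply: sumr_ge0 => o' _; exact: Pge0.
Qed.

Lemma pr_gt0 (T : eqType) (V : O -> T) o : 0 < P o -> 0 < pr V o.
Proof. by move=> h; apply: (lt_le_trans h); exact: pr_ge. Qed.

Lemma ln2_gt0 : 0 < ln (2 : R).
Proof. by apply: ln_gt0; lra. Qed.

Lemma log2M (a b : R) : 0 < a -> 0 < b -> log2 (a * b) = log2 a + log2 b.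
Proof. by move=> ha hb; rewrite /log2 lnM ?posrE // mulrDl. Qed.

Lemma log2V (a : R) : 0 < a -> log2 (a^-1) = - log2 a.
Proof. by move=> ha; rewrite /log2 lnV ?posrE // mulNr. Qed.

Lemma log2_div (a b : R) : 0 < a -> 0 < b -> log2 (a / b) = log2 a - log2 b.
Proof. by move=> ha hb; rewrite log2M ?invr_gt0 // log2V. Qed.

Lemma log2_le (a b : R) : 0 < a -> a <= b -> log2 a <= log2 b.
Proof.
move=> ha hab; rewrite /log2 ler_pM2r ?invr_gt0 ?ln2_gt0 //.
by rewrite ler_ln ?posrE // (lt_le_trans ha).
Qed.

Lemma log2_1 : log2 (1 : R) = 0.
Proof. by rewrite /log2 ln1 mul0r. Qed.

Lemma ln_le_sub1 (x : R) : 0 < x -> ln x <= x - 1.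
Proof.
move=> hx; have h := expR_ge1Dx (x - 1).
have e : 1 + (x - 1) = x by ring.
rewrite e in h.
by rewrite -[leRHS](expRK) ler_ln ?posrE ?expR_gt0.
Qed.

Lemma gibbs (r : O -> R) : \sum_o P o = 1 ->
  (forall o, 0 < P o -> 0 < r o) -> \sum_o P o * r o <= 1 ->
  \sum_o P o * log2 (r o) <= 0.
Proof.
move=> P1 hr hs.
suff : \sum_o P o * ln (r o) <= 0.
  move=> h; rewrite /log2.
  have -> : \sum_o P o * (ln (r o) / ln 2) = (\sum_o P o * ln (r o)) / ln 2.
    by rewrite mulr_suml; apply: eq_bigr => o _; rewrite mulrA.
  by rewrite pmulr_lle0 ?invr_gt0 ?ln2_gt0.
apply: le_trans (_ : \sum_o (P o * r o - P o) <= _).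
  apply: ler_sum => o _; case: (Pcase o) => [->|Po]; first by rewrite !mul0r subr0.
  by rewrite -[X in _ <= _ - X]mulr1 -mulrBr ler_wpM2l ?Pge0 ?ln_le_sub1 ?hr.
by rewrite sumrB P1 subr_le0.
Qed.


Lemma prE (T : eqType) (V : O -> T) o :
  pr V o = \sum_o' (if V o' == V o then P o' else 0).
Proof. by rewrite /pr /prob big_mkcond. Qed.

Lemma ent_congr (T T' : eqType) (V : O -> T) (V' : O -> T') :
  (forall o o', 0 < P o -> 0 < P o' -> (V o' == V o) = (V' o' == V' o)) ->
  entropy P V = entropy P V'.
Proof.
move=> h; rewrite /entropy; congr (- _); apply: eq_bigr => o _.
case: (Pcase o) => [->|Po]; first by rewrite !mul0r.
congr (_ * log2 _); rewrite /prob [LHS]big_mkcond [RHS]big_mkcond /=.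
apply: eq_bigr => o' _; case: (Pcase o') => [->|Po']; first by rewrite !if_same.
by rewrite h.
Qed.

Lemma condH_ratio (T1 T2 : eqType) (X : O -> T1) (Y : O -> T2) :
  cond_entropy P X Y =
  - \sum_o P o * log2 (pr (fun o => (X o, Y o)) o / pr Y o).
Proof.
rewrite /cond_entropy /entropy -opprD; congr (- _).
rewrite -sumrN -big_split /=; apply: eq_bigr => o _.
case: (Pcase o) => [->|Po]; first by rewrite !mul0r subr0.
rewrite log2_div ?pr_gt0 // mulrBr.
by rewrite /pr.
Qed.

Lemma H_mono (T1 T2 : eqType) (X : O -> T1) (Y : O -> T2) :
  entropy P Y <= entropy P (fun o => (X o, Y o)).
Proof.
rewrite /entropy lerN2; apply: ler_sum => o _.
case: (Pcase o) => [->|Po]; first by rewrite !mul0r.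
rewrite ler_wpM2l ?Pge0 //; apply: log2_le.
  exact: (pr_gt0 _ (fun o => (X o, Y o))).
by apply: prob_sub => o'; rewrite xpair_eqE => /andP[].
Qed.

Lemma condH_ge0 (T1 T2 : eqType) (X : O -> T1) (Y : O -> T2) :
  0 <= cond_entropy P X Y.
Proof. by rewrite /cond_entropy subr_ge0; apply: H_mono. Qed.

Lemma class_le1 (T : eqType) (V : O -> T) (v : T) :
  \sum_o (if V o == v then P o / pr V o else 0) <= 1.
Proof.
set c := prob P (fun o' => V o' == v).
have -> : \sum_o (if V o == v then P o / pr V o else 0) =
          (\sum_o (if V o == v then P o else 0)) / c.
  rewrite mulr_suml; apply: eq_bigr => o _.
  by case: eqP => [e|_]; rewrite ?mul0r // /pr e.
rewrite -big_mkcond /= -/(prob P _) -/c.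
have [->|cn0] := eqVneq c 0; first by rewrite mul0r ler01.
by rewrite divff.
Qed.

Lemma key_bound (T1 T2 T3 : eqType) (X : O -> T1) (Y : O -> T2) (Z : O -> T3) :
  \sum_o P o * (pr (fun o => (X o, Z o)) o * pr (fun o => (Y o, Z o)) o /
               (pr (fun o => (X o, (Y o, Z o))) o * pr Z o)) <= \sum_o P o.
Proof.
set xz := (fun o => (X o, Z o)); set yz := (fun o => (Y o, Z o)).
set xyz := (fun o => (X o, (Y o, Z o))).
have J : forall o', \sum_o (if xz o == xz o' then P o * pr yz o / pr xyz o else 0)
                    <= pr Z o'.
  move=> o'.
  have -> : \sum_o (if xz o == xz o' then P o * pr yz o / pr xyz o else 0) =
     \sum_o'' P o'' * \sum_o (if (xz o == xz o') && (yz o == yz o'')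
                               then P o / pr xyz o else 0).
    under eq_bigr => o _ do rewrite prE.
    transitivity (\sum_o \sum_o'' (if (xz o == xz o') && (yz o == yz o'')
                               then P o'' * (P o / pr xyz o) else 0)).
      apply: eq_bigr => o _; case: ifP => h /=.
        rewrite mulrAC mulr_sumr; apply: eq_bigr => o'' _.
        by rewrite eq_sym; case: ifP; rewrite ?mulr0 // mulrC.
      by rewrite big1.
    rewrite exchange_big; apply: eq_bigr => o'' _; rewrite mulr_sumr.
    by apply: eq_bigr => o _; case: ifP; rewrite ?mulr0.
  rewrite prE; apply: ler_sum => o'' _.
  have Kb : \sum_o (if (xz o == xz o') && (yz o == yz o'')
                   then P o / pr xyz o else 0) <= (if Z o'' == Z o' then 1 else 0).
    case: eqP => ez.
      apply: le_trans (class_le1 _ xyz (X o', (Y o'', Z o'))).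
      rewrite le_eqVlt; apply/orP; left; apply/eqP; apply: eq_bigr => o _.
      by rewrite /xz /yz /xyz !xpair_eqE ez; do 2 case: (_ == _) => //=;
         rewrite ?andbF ?andbT //= ?andbF.
    rewrite big1 // => o _.
    rewrite /xz /yz !xpair_eqE.
    case: (Z o =P Z o') => [e1|]; last by rewrite !andbF.
    case: (Z o =P Z o'') => [e2|]; last by rewrite !andbF.
    by case: ez; rewrite -e1 e2.
  case: eqP Kb => _ Kb.
    by rewrite -[leRHS]mulr1 ler_wpM2l ?Pge0.
  by rewrite mulr_ge0_le0 ?Pge0.
apply: (@le_trans _ _ (\sum_o' P o' * ((\sum_o (if xz o == xz o' then P o * pr yz o / pr xyz o else 0)) / pr Z o'))).
  rewrite le_eqVlt; apply/orP; left; apply/eqP.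
  transitivity (\sum_o \sum_o' (if xz o' == xz o then P o' * (P o * pr yz o / pr xyz o / pr Z o) else 0)).
    apply: eq_bigr => o _; rewrite [pr xz o]prE.
    transitivity ((\sum_o' (if xz o' == xz o then P o' else 0)) * (P o * pr yz o / pr xyz o / pr Z o)).
      by rewrite invfM; ring.
    by rewrite mulr_suml; apply: eq_bigr => o' _; case: ifP; rewrite ?mul0r.
  rewrite exchange_big; apply: eq_bigr => o' _.
  rewrite mulr_suml mulr_sumr; apply: eq_bigr => o _.
  rewrite eq_sym; case: ifP => [/eqP e|_]; last by rewrite mul0r mulr0.
  by have -> : pr Z o = pr Z o' by rewrite /pr; case: e => _ ->.
apply: ler_sum => o' _; case: (Pcase o') => [->|Po']; first by rewrite mul0r.
rewrite -[leRHS]mulr1 ler_wpM2l ?Pge0 // ler_pdivrMr ?mul1r ?pr_gt0 //.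
Qed.

Lemma CR (T1 T2 T3 : eqType) (X : O -> T1) (Y : O -> T2) (Z : O -> T3) :
  \sum_o P o = 1 ->
  entropy P (fun o => (X o, (Y o, Z o))) + entropy P Z <=
  entropy P (fun o => (X o, Z o)) + entropy P (fun o => (Y o, Z o)).
Proof.
move=> P1.
set r := fun o => pr (fun o => (X o, Z o)) o * pr (fun o => (Y o, Z o)) o /
               (pr (fun o => (X o, (Y o, Z o))) o * pr Z o).
have g : \sum_o P o * log2 (r o) <= 0.
  apply: gibbs => //.
    move=> o Po; rewrite /r divr_gt0 ?mulr_gt0 //; exact: pr_gt0.
  by rewrite -P1; apply: key_bound.
have E : \sum_o P o * log2 (r o) =
   entropy P (fun o => (X o, (Y o, Z o))) + entropy P Z
   - entropy P (fun o => (X o, Z o)) - entropy P (fun o => (Y o, Z o)).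
  transitivity (\sum_o (P o * log2 (pr (fun o => (X o, Z o)) o) +
     P o * log2 (pr (fun o => (Y o, Z o)) o) - P o * log2 (pr (fun o => (X o, (Y o, Z o))) o)
     - P o * log2 (pr Z o))).
    apply: eq_bigr => o _.
    case: (Pcase o) => [->|Po]; first by rewrite !mul0r !subr0 addr0.
    rewrite /r log2_div ?log2M ?mulr_gt0 ?(pr_gt0 _ _ _ Po) //.
    ring.
  rewrite !sumrB big_split /= /entropy /pr; ring.
lra.
Qed.

Lemma ent_congr_all (T T' : eqType) (V : O -> T) (V' : O -> T') :
  (forall o o', (V o' == V o) = (V' o' == V' o)) -> entropy P V = entropy P V'.
Proof. by move=> h; apply: ent_congr => o o' _ _; apply: h. Qed.

Lemma ffeq {I : finType} {U : Type} {f g : {ffun I -> U}} (e : f = g) x : f x = g x.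
Proof. by rewrite e. Qed.

Lemma subadd (S : nat) (T T' : eqType) (A : 'I_S -> O -> T) (Z : O -> T') :
  \sum_o P o = 1 ->
  cond_entropy P (fun o => [ffun s => A s o]) Z <= \sum_(s < S) cond_entropy P (A s) Z.
Proof.
move=> P1.
pose Ap (n : nat) o := [ffun s : 'I_S => if (s < n)%N then Some (A s o) else None].
have hS : cond_entropy P (fun o => [ffun s => A s o]) Z = cond_entropy P (Ap S) Z.
  rewrite /cond_entropy; congr (_ - _); apply: ent_congr_all => o o'.
  rewrite !xpair_eqE; congr (_ && _).
  apply/eqP/eqP => e; apply/ffunP => s; have := ffeq e s;
    rewrite !ffunE ltn_ord; [by move->|by case].
suff h : forall n, (n <= S)%N -> cond_entropy P (Ap n) Z <=
              \sum_(s < S | (s < n)%N) cond_entropy P (A s) Z.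
  rewrite hS; apply: le_trans (h S (leqnn S)) _.
  by rewrite le_eqVlt; apply/orP; left; apply/eqP; apply: eq_bigl => s; rewrite ltn_ord.
elim=> [_|n IH hn].
  rewrite big_pred0 // /cond_entropy subr_le0 le_eqVlt; apply/orP; left; apply/eqP.
  apply: ent_congr_all => o o'; rewrite xpair_eqE.
  have -> : Ap 0%N o' = Ap 0%N o by apply/ffunP => s; rewrite !ffunE.
  by rewrite eqxx.
pose s0 : 'I_S := Ordinal hn.
have Ape : forall o o', (Ap n.+1 o' == Ap n.+1 o) = (A s0 o' == A s0 o) && (Ap n o' == Ap n o).
  move=> o o'; apply/eqP/andP.
    move=> e; split.
      by have := ffeq e s0; rewrite !ffunE /= ltnSn; case=> ->.
    apply/eqP/ffunP => s; rewrite !ffunE; case: ifP => // hs.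
    by have := ffeq e s; rewrite !ffunE ltnS (ltnW hs).
  case=> /eqP e1 /eqP e2; apply/ffunP => s; rewrite !ffunE ltnS.
  case: (ltngtP s n) => hs.
  - by have := ffeq e2 s; rewrite !ffunE hs.
  - by [].
  - have -> : s = s0 by apply: val_inj.
    by rewrite e1.
have e : entropy P (fun o => (Ap n.+1 o, Z o)) = entropy P (fun o => (A s0 o, (Ap n o, Z o))).
  by apply: ent_congr_all => o o'; rewrite !xpair_eqE Ape andbA.
have c := CR _ _ _ (A s0) (Ap n) Z P1.
have ih := IH (ltnW hn).
rewrite (bigD1 s0) /=; last by rewrite ltnSn.
have -> : \sum_(i < S | (i < n.+1)%N && (i != s0)) cond_entropy P (A i) Z =
          \sum_(i < S | (i < n)%N) cond_entropy P (A i) Z.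
  apply: eq_bigl => s; rewrite ltnS leq_eqVlt -(inj_eq val_inj) /=.
  by case: (ltngtP s n).
move: ih; rewrite /cond_entropy e; lra.
Qed.

Lemma sum_seq_pred1 (T : eqType) (Us : seq T) (u : T) (c : R) :
  uniq Us -> u \in Us -> \sum_(v <- Us) (if v == u then c else 0) = c.
Proof.
move=> uU uin; rewrite (big_rem u) // eqxx big_seq big1 => [|v].
  exact: Monoid.mulm1.
by case: eqP => // ->; rewrite mem_rem_uniqF.
Qed.

Lemma regroup (T : eqType) (V : O -> T) (Us : seq T) (phi : T -> R) :
  uniq Us -> (forall o, V o \in Us) ->
  \sum_o P o * phi (V o) = \sum_(v <- Us) prob P (fun o => V o == v) * phi v.
Proof.
move=> uU hU.
transitivity (\sum_(v <- Us) \sum_o (if V o == v then P o * phi v else 0)).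
  rewrite exchange_big; apply: eq_bigr => o _.
  rewrite -(sum_seq_pred1 _ Us (V o) (P o * phi (V o))) //.
  by apply: eq_bigr => v _; rewrite eq_sym; case: eqP => // ->.
apply: eq_bigr => v _; rewrite /prob [in RHS]big_mkcond mulr_suml.
by apply: eq_bigr => o _; case: ifP; rewrite ?mul0r.
Qed.

Lemma ent_dist (T U : eqType) (V1 V2 : O -> T) (g : T -> U) :
  (forall v, prob P (fun o => V1 o == v) = prob P (fun o => V2 o == v)) ->
  entropy P (fun o => g (V1 o)) = entropy P (fun o => g (V2 o)).
Proof.
move=> hV.
set Us := undup (map V1 (enum O) ++ map V2 (enum O)).
have uU : uniq Us by apply: undup_uniq.
have h1 : forall o, V1 o \in Us.
  by move=> o; rewrite mem_undup mem_cat map_f ?mem_enum.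
have h2 : forall o, V2 o \in Us.
  by move=> o; rewrite mem_undup mem_cat orbC map_f ?mem_enum.
set psi := fun u => \sum_(v <- Us) prob P (fun o => V1 o == v) * (if g v == u then 1 else 0).
have p1 : forall u, prob P (fun o => g (V1 o) == u) = psi u.
  move=> u; rewrite /psi -(regroup _ V1 Us (fun v => if g v == u then 1 else 0)) //.
  by rewrite /prob [in LHS]big_mkcond; apply: eq_bigr => o _; case: ifP; rewrite ?mulr1 ?mulr0.
have p2 : forall u, prob P (fun o => g (V2 o) == u) = psi u.
  move=> u; rewrite /psi.
  under eq_bigr do rewrite hV.
  rewrite -(regroup _ V2 Us (fun v => if g v == u then 1 else 0)) //.
  by rewrite /prob [in LHS]big_mkcond; apply: eq_bigr => o _; case: ifP; rewrite ?mulr1 ?mulr0.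
rewrite /entropy; congr (- _).
transitivity (\sum_o P o * log2 (psi (g (V1 o)))).
  by apply: eq_bigr => o _; rewrite p1.
transitivity (\sum_o P o * log2 (psi (g (V2 o)))); last first.
  by apply: eq_bigr => o _; rewrite p2.
rewrite (regroup _ V1 Us (fun v => log2 (psi (g v)))) // (regroup _ V2 Us (fun v => log2 (psi (g v)))) //.
by apply: eq_bigr => v _; rewrite hV.
Qed.

Lemma condH_eq (T1 T2 T3 T4 : eqType) (X : O -> T1) (Y : O -> T2) (X' : O -> T3) (Y' : O -> T4) :
  (forall o, 0 < P o -> pr (fun o => (X o, Y o)) o / pr Y o =
                        pr (fun o => (X' o, Y' o)) o / pr Y' o) ->
  cond_entropy P X Y = cond_entropy P X' Y'.
Proof.
move=> h; rewrite !condH_ratio; congr (- _); apply: eq_bigr => o _.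
by case: (Pcase o) => [->|Po]; rewrite ?mul0r // h.
Qed.
End Info.

Arguments pr {R O} P {T} V o.

Lemma prob_ext (R : realType) (O : finType) (P : O -> R) (E E' : pred O) :
  (forall o, E o = E' o) -> prob P E = prob P E'.
Proof. by move=> h; rewrite /prob; apply: eq_bigl => o; rewrite h. Qed.
Arguments prob_ext {R O P E} E'.

Section Model.
Variables (R : realType) (K S L : nat) (sc : pir_scheme R K S L).
Hypothesis vd : valid_dist sc.
Local Notation Wsp := {ffun 'I_K -> L.-tuple bool}.
Local Notation PP := (P0 sc).

Definition cnt (E : pred Wsp) : R := \sum_(W | E W) 1.

Lemma two_gt0 : 0 < (2 : R) ^+ (K * L).
Proof. by apply: exprn_gt0; lra. Qed.

Lemma PPge0 o : 0 <= PP o.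
Proof. by rewrite /P0 divr_ge0 ?(ltW two_gt0) //; case: vd => h _; apply: h. Qed.

Lemma totW : \sum_(W : Wsp) (1 : R) = 2 ^+ (K * L).
Proof.
rewrite sumr_const card_ffun card_tuple card_bool card_ord -expnM mulnC.
by rewrite natrX.
Qed.

Lemma M1 (E1 : pred (rnd sc)) (E2 : pred Wsp) :
  prob PP (fun o => E1 o.1 && E2 o.2) =
  (\sum_(f | E1 f) prF sc f) * (cnt E2 / 2 ^+ (K * L)).
Proof.
rewrite /prob /P0 -(pair_big E1 E2 (fun f W => prF sc f / 2 ^+ (K * L))) /=.
rewrite mulr_suml; apply: eq_bigr => f _.
by rewrite /cnt mulr_suml mulr_sumr; apply: eq_bigr => W _; rewrite mul1r.
Qed.

Lemma PPsum : \sum_o PP o = 1.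
Proof.
have := M1 predT predT; rewrite /prob /= => ->.
case: vd => _ ->; rewrite mul1r /cnt totW divff //.
by rewrite gt_eqF ?two_gt0.
Qed.

Lemma prF_pos o : 0 < PP o -> 0 < prF sc o.1.
Proof.
rewrite /P0 => h; case: vd => h0 _.
by move: h; rewrite pmulr_lgt0 ?invr_gt0 ?two_gt0.
Qed.

Lemma condH_prod (Tx T T' : eqType) (X : _ -> Tx) (Y : rnd sc -> T)
   (Phi : Wsp -> T') (g : T -> Wsp -> Tx) :
 (forall o, X o = g (Y o.1) o.2) ->
 forall o, 0 < PP o ->
 pr PP (fun o => (X o, (Phi o.2, Y o.1))) o / pr PP (fun o => (Phi o.2, Y o.1)) o =
 cnt (fun W => (g (Y o.1) W == X o) && (Phi W == Phi o.2)) /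
 cnt (fun W => Phi W == Phi o.2).
Proof.
move=> hX o Po.
rewrite /pr (prob_ext (fun o' => (Y o'.1 == Y o.1) &&
     ((g (Y o.1) o'.2 == X o) && (Phi o'.2 == Phi o.2)))); last first.
  move=> o'; rewrite !xpair_eqE hX.
  by case: (Y o'.1 =P Y o.1) => [->|]; rewrite ?andbT ?andbF.
rewrite [X in _ / X](prob_ext (fun o' => (Y o'.1 == Y o.1) && (Phi o'.2 == Phi o.2))); last first.
  by move=> o' /=; rewrite !xpair_eqE andbC.
rewrite (M1 (fun f => Y f == Y o.1) (fun W => (g (Y o.1) W == X o) && (Phi W == Phi o.2))).
rewrite (M1 (fun f => Y f == Y o.1) (fun W => Phi W == Phi o.2)).
have a0 : 0 < \sum_(f | Y f == Y o.1) prF sc f.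
  rewrite (bigD1 o.1) //= ltr_pwDl ?prF_pos //.
  by apply: sumr_ge0 => f _; case: vd => h _; apply: h.
have d0 : 0 < cnt (fun W => Phi W == Phi o.2).
  rewrite /cnt (bigD1 o.2) //= ltr_pwDl //.
  by apply: sumr_ge0.
have c0 := two_gt0.
field.
by rewrite !gt_eqF.
Qed.


Lemma M2 (T' : eqType) (Phi : Wsp -> T') th s :
  cond_entropy PP (A sc th s) (fun o => (Phi o.2, Qall sc th o)) =
  cond_entropy PP (A sc th s) (fun o => (Phi o.2, Q sc th s o)).
Proof.
apply: condH_eq => [|o Po]; first exact: PPge0.
rewrite (@condH_prod _ _ _ (A sc th s) (fun f => [ffun s => query sc th s f]) Phi
                    (fun q W => answer sc s (q s) W)) //; last first.
  by move=> o'; rewrite ffunE.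
rewrite (@condH_prod _ _ _ (A sc th s) (fun f => query sc th s f) Phi
                    (fun q W => answer sc s q W)) //.
by rewrite ffunE.
Qed.

Lemma M3 (T' : eqType) (Phi : Wsp -> T') k k' s : private sc ->
  cond_entropy PP (A sc k s) (fun o => (Phi o.2, Q sc k s o)) =
  cond_entropy PP (A sc k' s) (fun o => (Phi o.2, Q sc k' s o)).
Proof.
move=> priv.
pose V k o := (Q sc k s o, (A sc k s o, o.2)).
have hV : forall v, prob PP (fun o => V k o == v) = prob PP (fun o => V k' o == v).
  case=> q [a w].
  rewrite (prob_ext (fun o => [&& Q sc k s o == q, A sc k s o == a & o.2 == w])); last first.
    by move=> o; rewrite /V !xpair_eqE.
  rewrite [RHS](prob_ext (fun o => [&& Q sc k' s o == q, A sc k' s o == a & o.2 == w])); last first.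
    by move=> o; rewrite /V !xpair_eqE.
  exact: priv.
rewrite /cond_entropy.
have e1 := @ent_dist _ _ PP _ _ (V k) (V k') (fun v => (v.2.1, (Phi v.2.2, v.1))) hV.
have e2 := @ent_dist _ _ PP _ _ (V k) (V k') (fun v => (Phi v.2.2, v.1)) hV.
simpl in e1, e2.
by rewrite e1 e2.
Qed.


Definition wlt (k : nat) (W : Wsp) : {ffun 'I_K -> option (L.-tuple bool)} :=
  [ffun i : 'I_K => if (i < k)%N then Some (W i) else None].

Lemma tsw_invol (T : eqType) (w t x : T) :
  let tsw := fun x => if x == w then t else if x == t then w else x in
  tsw (tsw x) = x.
Proof.
move=> tsw; rewrite /tsw.
have [->|hw] := eqVneq x w.
  rewrite eqxx; have [->|htw] := eqVneq t w; first by [].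
  by rewrite ?(negbTE htw) ?eqxx.
have [->|ht] := eqVneq x t.
  by rewrite ?(negbTE hw) ?eqxx.
by rewrite ?(negbTE hw) ?(negbTE ht).
Qed.

Lemma tsw_eq (T : eqType) (w t y : T) :
  ((if y == w then t else if y == t then w else y) == t) = (y == w).
Proof.
case: (boolP (y == w)) => hw; first by rewrite eqxx.
case: (boolP (y == t)) => ht; last by rewrite (negbTE ht).
by apply/eqP => e; move: hw; rewrite (eqP ht) -e eqxx.
Qed.

Lemma cnt_split (k : 'I_K) (w : L.-tuple bool) (E : pred Wsp) :
  (forall W W' : Wsp, (forall i, i != k -> W i = W' i) -> E W = E W') ->
  cnt (fun W => (W k == w) && E W) * 2 ^+ L = cnt E.
Proof.
move=> hE.
have sw_eq : forall t, cnt (fun W => (W k == t) && E W) = cnt (fun W => (W k == w) && E W).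
  move=> t.
  pose tsw := fun x => if x == w then t else if x == t then w else x.
  pose sw := fun W : Wsp => [ffun i => if i == k then tsw (W i) else W i].
  have swK : cancel sw sw.
    move=> W; apply/ffunP => i; rewrite !ffunE; case: (i =P k) => // ->.
    exact: tsw_invol.
  rewrite /cnt (reindex_inj (can_inj swK)) /=; apply: eq_bigl => W.
  rewrite ffunE eqxx tsw_eq; congr (_ && _); apply: hE => i hi.
  by rewrite ffunE (negbTE hi).
transitivity (\sum_(t : L.-tuple bool) cnt (fun W => (W k == w) && E W)).
  by rewrite sumr_const card_tuple card_bool -[in RHS]mulr_natr natrX.
transitivity (\sum_(t : L.-tuple bool) cnt (fun W => (W k == t) && E W)).
  by apply: eq_bigr => t _; rewrite sw_eq.
rewrite /cnt.
transitivity (\sum_(t : L.-tuple bool) \sum_(W : Wsp) (if (W k == t) && E W then (1 : R) else 0)).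
  by apply: eq_bigr => t _; rewrite big_mkcond.
rewrite exchange_big [RHS]big_mkcond; apply: eq_bigr => W _.
case: (E W); last by rewrite big1 // => t _; rewrite andbF.
transitivity (\sum_(t | t == W k) (1 : R)).
  by rewrite [RHS]big_mkcond; apply: eq_bigr => t _; rewrite andbT eq_sym.
by rewrite big_pred1_eq.
Qed.

Lemma wltS (k : 'I_K) (W W' : Wsp) :
  (wlt k.+1 W' == wlt k.+1 W) = (wlt k W' == wlt k W) && (W' k == W k).
Proof.
apply/eqP/andP.
  move=> e; split.
    apply/eqP/ffunP => i; rewrite !ffunE; case: ifP => // hi.
    by have := ffeq e i; rewrite !ffunE ltnS (ltnW hi).
  by have := ffeq e k; rewrite !ffunE ltnSn; case=> ->.
case=> /eqP e1 /eqP e2; apply/ffunP => i; rewrite !ffunE ltnS.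
case: (ltngtP i k) => hi.
- by have := ffeq e1 i; rewrite !ffunE hi.
- by [].
- have -> : i = k by apply: val_inj.
  by rewrite e2.
Qed.

Lemma log2X n : log2 ((2 : R) ^+ n) = n%:R.
Proof.
rewrite /log2 lnXn; last by lra.
by rewrite -[ln 2 *+ n]mulr_natl mulfK // gt_eqF // ln2_gt0.
Qed.

Lemma M4 th (k : 'I_K) :
  cond_entropy PP (fun o => o.2 k) (fun o => (wlt k o.2, Qall sc th o)) = L%:R.
Proof.
rewrite (condH_ratio _ _ _ PPge0).
transitivity (- \sum_o PP o * (- L%:R)); last first.
  by rewrite -mulr_suml PPsum mul1r opprK.
congr (- _); apply: eq_bigr => o _.
case: (Pcase _ _ _ PPge0 o) => [->|Po]; first by rewrite !mul0r.
rewrite (@condH_prod _ _ _ (fun o => o.2 k) (fun f => [ffun s => query sc th s f])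
           (wlt k) (fun _ W => W k)) //.
rewrite -(cnt_split k (o.2 k) (fun W => wlt k W == wlt k o.2)); last first.
  move=> W W' h; congr (_ == _); apply/ffunP => i; rewrite !ffunE.
  case: ifP => // hi; rewrite h // -(inj_eq val_inj) /=.
  by rewrite ltn_eqF.
have c0 : 0 < cnt (fun W => (W k == o.2 k) && (wlt k W == wlt k o.2)).
  rewrite /cnt (bigD1 o.2) ?eqxx //= ltr_pwDl //.
  by apply: sumr_ge0.
set c := cnt _ in c0 *.
have -> : c / (c * 2 ^+ L) = (2 ^+ L)^-1.
  have t0 : (2 : R) ^+ L != 0 by rewrite expf_neq0 //; lra.
  by field; rewrite t0 gt_eqF.
by rewrite log2V ?exprn_gt0 ?log2X.
Qed.


Definition G (k : nat) (th : 'I_K) :=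
  cond_entropy PP (Aall sc th) (fun o => (wlt k o.2, Qall sc th o)).

Lemma C1 (k : 'I_K) : correct sc -> G k k = L%:R + G k.+1 k.
Proof.
move=> hcor; rewrite /G /cond_entropy.
have E1 : entropy PP (fun o => (Aall sc k o, (wlt k o.2, Qall sc k o))) =
          entropy PP (fun o => (Aall sc k o, (wlt k.+1 o.2, Qall sc k o))).
  case: (hcor k) => dec hdec.
  apply: (ent_congr _ _ _ PPge0) => o o' Po Po'.
  rewrite !xpair_eqE wltS.
  case: (Aall sc k o' =P Aall sc k o) => ea //=.
  case: (Qall sc k o' =P Qall sc k o) => eq; rewrite ?andbF ?andbT //.
  have -> : o'.2 k == o.2 k by rewrite -(hdec o' Po') -(hdec o Po) ea eq.
  by rewrite andbT.
have E2 : entropy PP (fun o => (wlt k.+1 o.2, Qall sc k o)) =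
          entropy PP (fun o => (o.2 k, (wlt k o.2, Qall sc k o))).
  apply: (ent_congr_all _ _ _ PPge0) => o o'.
  rewrite !xpair_eqE wltS.
  by case: (wlt k o'.2 == _); case: (o'.2 k == _).
have E3 := M4 k k.
rewrite /cond_entropy in E3.
rewrite E1; lra.
Qed.

Lemma H1_ge0 (k : nat) th : 0 <= G k th.
Proof. exact: (condH_ge0 _ _ _ PPge0). Qed.

Lemma condH_sub (T' : eqType) (Z : _ -> T') th s :
  cond_entropy PP (A sc th s) Z <= cond_entropy PP (Aall sc th) Z.
Proof.
rewrite /cond_entropy lerD2r.
apply: le_trans (H_mono _ _ _ PPge0 _ _ (Aall sc th) (fun o => (A sc th s o, Z o))) _.
rewrite le_eqVlt; apply/orP; left; apply/eqP.
apply: (ent_congr_all _ _ _ PPge0) => o o'.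
rewrite !xpair_eqE.
case: (Aall sc th o' =P Aall sc th o) => e //=.
by have := ffeq e s; rewrite !ffunE => ->; rewrite eqxx.
Qed.

Lemma C2 (k k' : 'I_K) : private sc -> k' = k.+1 :> nat ->
  G k' k' <= S%:R * G k.+1 k.
Proof.
move=> priv hk.
have step : forall s, cond_entropy PP (A sc k' s) (fun o => (wlt k' o.2, Qall sc k' o))
                      <= G k.+1 k.
  move=> s.
  rewrite (M2 _ (wlt k') k' s) -(M3 _ (wlt k') k k' s priv) -(M2 _ (wlt k') k s).
  have -> : wlt k' = wlt k.+1 by rewrite hk.
  exact: condH_sub.
apply: le_trans (subadd _ _ _ PPge0 _ _ _ (fun s => A sc k' s) _ PPsum) _.
apply: le_trans (ler_sum _ (fun s _ => step s)) _.
by rewrite sumr_const card_ord mulr_natl.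
Qed.

Lemma C0 (k : 'I_K) : G 0 k <= download sc k.
Proof.
rewrite /download.
apply: le_trans (subadd _ _ _ PPge0 _ _ _ (fun s => A sc k s) _ PPsum).
rewrite le_eqVlt; apply/orP; left; apply/eqP.
rewrite /G /cond_entropy; congr (_ - _); apply: (ent_congr_all _ _ _ PPge0) => o o';
  rewrite !xpair_eqE;
  have -> : wlt 0 o'.2 = wlt 0 o.2 by apply/ffunP => i; rewrite !ffunE.
  by rewrite eqxx.
by rewrite eqxx.
Qed.

Lemma chain : correct sc -> private sc -> (0 < S)%N ->
  forall n (k : 'I_K), (k + n.+1)%N = K ->
  L%:R * \sum_(i < n.+1) (S%:R : R) ^- i <= G k k.
Proof.
move=> hc hp S0; elim=> [|n IH] k hk.
  rewrite big_ord1 expr0 invr1 mulr1 (C1 k hc).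
  by have := H1_ge0 k.+1 k; lra.
have : (k.+1 < k + n.+2)%N by rewrite !addnS !ltnS leq_addr.
rewrite hk => hk'.
pose k' : 'I_K := Ordinal hk'.
have ih := IH k' (etrans (addSnnS k n.+1) hk).
have c2 := C2 k k' hp erefl.
have sp : 0 < (S%:R : R) by rewrite ltr0n.
rewrite (C1 k hc) big_ord_recl expr0 invr1.
have e : \sum_(i < n.+1) (S%:R : R) ^- (bump 0 i) =
         (S%:R)^-1 * \sum_(i < n.+1) (S%:R : R) ^- i.
  by rewrite mulr_sumr; apply: eq_bigr => i _; rewrite /bump /= exprS invfM.
rewrite e.
have h : L%:R * (\sum_(i < n.+1) (S%:R : R) ^- i) / S%:R <= G k.+1 k.
  by rewrite ler_pdivrMr // [X in _ <= X]mulrC; apply: le_trans ih c2.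
move: h; set T := \sum_(i < n.+1) _; move=> h.
have -> : L%:R * (1 + S%:R^-1 * T) = L%:R + L%:R * T / S%:R by field; rewrite gt_eqF.
lra.
Qed.

End Model.

Lemma converse (R : realType) (K S : nat) (r : R) : (0 < K)%N -> (0 < S)%N ->
  achievable K S r -> r <= (\sum_(i < K) (S%:R : R) ^- i)^-1.
Proof.
move=> K0 S0 [L [sc [L0 vd hc hp hr]]].
pose k0 : 'I_K := Ordinal K0.
have hch := @chain _ _ _ _ sc vd hc hp S0 K.-1 k0 (prednK K0).
rewrite (prednK K0) in hch.
have hd := @C0 _ _ _ _ sc vd k0.
set T := \sum_(i < K) _ in hch *.
have T1 : 1 <= T.
  rewrite /T (bigD1 k0) //= expr0 invr1 lerDl.
  by apply: sumr_ge0 => i _; rewrite invr_ge0 exprn_ge0 // ler0n.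
have Lp : 0 < (L%:R : R) by rewrite ltr0n.
have hL : L%:R * T <= download sc k0 := le_trans hch hd.
have hr0 := hr k0.
have [rle|rgt] := lerP r 0.
  by apply: le_trans rle _; rewrite invr_ge0; lra.
rewrite -[T^-1]mul1r ler_pdivlMr; last lra.
have h1 : r * (L%:R * T) <= r * download sc k0 by rewrite ler_wpM2l // ltW.
have h2 : L%:R * (r * T) <= L%:R * 1.
  by rewrite mulr1 mulrCA; apply: le_trans h1 hr0.
by rewrite ler_pM2l in h2.
Qed.

Section TSC.
Variables (R : realType) (n K : nat).
Local Notation Sn := n.+2.
Local Notation Ln := n.+1.
Local Notation Wsp := {ffun 'I_K -> Ln.-tuple bool}.
Local Notation Fsp := {ffun 'I_K -> 'I_Sn}.

Definition bitv (j : 'I_Sn) (x : Ln.-tuple bool) : bool :=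
  if (j : nat) is j'.+1 then tnth x (inord j') else false.

Definition tquery (th : 'I_K) (s : 'I_Sn) (f : Fsp) : Fsp :=
  [ffun k => if k == th then f k + s else f k].

Definition tanswer (s : 'I_Sn) (q : Fsp) (W : Wsp) : bool :=
  \big[addb/false]_(k < K) bitv (q k) (W k).

Definition cF : R := ((Sn%:R : R) ^+ K)^-1.

Definition tsc : pir_scheme R K Sn Ln :=
  @PirScheme R K Sn Ln Fsp (fun _ => cF) Fsp bool tquery tanswer.

Lemma cF_gt0 : 0 < cF.
Proof. by rewrite /cF invr_gt0 exprn_gt0 // ltr0n. Qed.

Lemma tsc_valid : valid_dist tsc.
Proof.
split => [f|]; first exact: ltW cF_gt0.
rewrite /= sumr_const card_ffun !card_ord -mulr_natr natrX /cF mulVf //.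
by rewrite expf_neq0 // pnatr_eq0.
Qed.

Lemma tanswer_split th s f W : tanswer s (tquery th s f) W =
  bitv (f th + s) (W th) (+) \big[addb/false]_(k < K | k != th) bitv (f k) (W k).
Proof.
rewrite /tanswer (bigD1 th) //= ffunE eqxx; congr (_ (+) _).
by apply: eq_bigr => k hk; rewrite ffunE (negbTE hk).
Qed.

Definition tdec (th : 'I_K) (q : {ffun 'I_Sn -> Fsp}) (a : {ffun 'I_Sn -> bool}) :
  Ln.-tuple bool :=
  [tuple (a (inord i.+1 - q 0 th) (+) a (- q 0 th)) | i < Ln].

Lemma tsc_correct : correct tsc.
Proof.
move=> th; exists (tdec th) => o _.
apply: eq_from_tnth => i; rewrite tnth_mktuple /Qall /Aall /A /Q !ffunE /=.
rewrite !tanswer_split eqxx addr0 [o.1 th + (_ - _)]addrC subrK subrr.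
have -> : bitv (inord i.+1) (o.2 th) = tnth (o.2 th) i.
  have hi : (i.+1 < n.+2)%N by rewrite ltnS ltn_ord.
  by rewrite /bitv (inordK hi) /= inord_val.
have -> : bitv 0 (o.2 th) = false by [].
by case: (tnth _ _); case: (\big[addb/false]_(k < K | k != th) _).
Qed.

Lemma sum_tquery th s q : \sum_(f | tquery th s f == q) cF = cF.
Proof.
pose u : Fsp := [ffun i => if i == th then q i - s else q i].
rewrite (eq_bigl (fun f => f == u)) ?big_pred1_eq // => f.
apply/eqP/eqP => e; apply/ffunP => i.
  rewrite /u -e !ffunE; case: (i == th) => //; by rewrite addrK.
by rewrite e /u !ffunE; case: (i == th) => //; rewrite subrK.
Qed.

Lemma tsc_private : private tsc.
Proof.
move=> s k k' q a w.
suff key : forall k0, prob (P0 tsc) (fun o => [&& Q tsc k0 s o == q, A tsc k0 s o == a & o.2 == w]) =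
   cF * (cnt R K Ln (fun W => (tanswer s q W == a) && (W == w)) / 2 ^+ (K * Ln)).
  by rewrite !key.
move=> k0.
rewrite (prob_ext (fun o => (tquery k0 s o.1 == q) && ((tanswer s q o.2 == a) && (o.2 == w)))).
  by rewrite (@M1 _ _ _ _ tsc (fun f => tquery k0 s f == q) (fun W => (tanswer s q W == a) && (W == w))) sum_tquery.
move=> o /=; rewrite /A /Q /=.
by case: (tquery k0 s o.1 =P q) => [->|].
Qed.


Lemma cnt_ext (E E' : pred Wsp) : (forall W, E W = E' W) -> cnt R K Ln E = cnt R K Ln E'.
Proof. by move=> h; rewrite /cnt; apply: eq_bigl => W; rewrite h. Qed.

Lemma flip_count s (q : Fsp) a (k1 : 'I_K) : q k1 != 0 ->
  cnt R K Ln (fun W => tanswer s q W == a) * 2 = 2 ^+ (K * Ln).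
Proof.
move=> hq.
have [m hm] : exists m, nat_of_ord (q k1) = m.+1.
  case e : (nat_of_ord (q k1)) => [|m]; last by exists m.
  by move: hq; rewrite -(inj_eq val_inj) /= e.
pose p : 'I_Ln := inord m.
pose tog (x : Ln.-tuple bool) : Ln.-tuple bool :=
  [tuple (if i == p then ~~ tnth x i else tnth x i) | i < Ln].
pose fl (W : Wsp) : Wsp := [ffun k => if k == k1 then tog (W k) else W k].
have togK : involutive tog.
  move=> x; apply: eq_from_tnth => i; rewrite !tnth_mktuple.
  by case: (i == p) => //; rewrite negbK.
have flK : involutive fl.
  by move=> W; apply/ffunP => k; rewrite !ffunE; case: (k == k1) => //; rewrite togK.
have bit_tog : forall x, bitv (q k1) (tog x) = ~~ bitv (q k1) x.
  by move=> x; rewrite /bitv hm tnth_mktuple eqxx.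
have ans_fl : forall W, tanswer s q (fl W) = ~~ tanswer s q W.
  move=> W; rewrite /tanswer (bigD1 k1) // [X in ~~ X](bigD1 k1) //= ffunE eqxx bit_tog.
  rewrite (eq_bigr (fun k => bitv (q k) (W k))); last first.
    by move=> k hk; rewrite ffunE (negbTE hk).
  by case: (bitv _ _); case: (\big[addb/false]_(i < K | i != k1) _).
have e1 : cnt R K Ln (fun W => tanswer s q W == a) =
          cnt R K Ln (fun W => tanswer s q W == ~~ a).
  rewrite /cnt (reindex_inj (inv_inj flK)) /=; apply: eq_bigl => W.
  by rewrite ans_fl; case: a; case: (tanswer s q W).
have -> : cnt R K Ln (fun W => tanswer s q W == a) * 2 =
   cnt R K Ln (fun W => tanswer s q W == a) + cnt R K Ln (fun W => tanswer s q W == a) by ring.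
rewrite -(totW R K Ln) (bigID (fun W => tanswer s q W == a)) /=.
congr (_ + _); rewrite e1 /cnt; apply: eq_bigl => W.
by case: (a); case: (tanswer s q W).
Qed.


Lemma tanswer0 s W : tanswer s [ffun => 0] W = false.
Proof. by rewrite /tanswer big1 // => k _; rewrite ffunE. Qed.

Lemma tsc_condH th s :
  cond_entropy (P0 tsc) (A tsc th s) (Qall tsc th) = 1 - cF.
Proof.
have vd := tsc_valid.
have Pge := @PPge0 _ _ _ _ tsc vd.
have -> : cond_entropy (P0 tsc) (A tsc th s) (Qall tsc th) =
          cond_entropy (P0 tsc) (A tsc th s) (fun o => ((fun _ : Wsp => tt) o.2, Qall tsc th o)).
  rewrite /cond_entropy; congr (_ - _); apply: (ent_congr_all _ _ _ Pge) => o o';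
    by rewrite !xpair_eqE eqxx.
rewrite (condH_ratio _ _ _ Pge).
have T0 : (2 : R) ^+ (K * Ln) != 0 by rewrite expf_neq0 // pnatr_eq0.
transitivity (- \sum_o P0 tsc o * (if tquery th s o.1 == [ffun => 0] then 0 else -1)).
  congr (- _); apply: eq_bigr => o _.
  case: (Pcase _ _ _ Pge o) => [->|Po]; first by rewrite !mul0r.
  rewrite (@condH_prod _ _ _ _ tsc vd _ _ _ (A tsc th s) (fun f => [ffun s => tquery th s f])
     (fun _ => tt) (fun q W => tanswer s (q s) W)) //; last by move=> o'; rewrite ffunE.
  rewrite (cnt_ext (fun W => tt == tt) predT) // /cnt totW.
  rewrite ffunE.
  case: ifP => q0.
    rewrite (eqP q0) /A /Q /= (eqP q0) tanswer0.
    rewrite (eq_bigl predT) ?totW; last by move=> W; rewrite tanswer0.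
    by rewrite divff // log2_1.
  have [k1 hk1] : exists k1, tquery th s o.1 k1 != 0.
    apply/existsP; apply: contraFT q0 => /existsPn h.
    by apply/eqP/ffunP => k; rewrite [RHS]ffunE; apply/eqP/negPn; exact: h k.
  have fc := flip_count s (tquery th s o.1) (A tsc th s o) k1 hk1.
  rewrite /cnt in fc.
  have -> : \sum_(W | (tanswer s (tquery th s o.1) W == A tsc th s o) && (tt == tt)) (1 : R) =
            \sum_(W | tanswer s (tquery th s o.1) W == A tsc th s o) 1.
    by apply: eq_bigl => W; rewrite andbT.
  have -> : (\sum_(W | tanswer s (tquery th s o.1) W == A tsc th s o) (1 : R)) / 2 ^+ (K * Ln) = 2^-1.
    have c0 : \sum_(W | tanswer s (tquery th s o.1) W == A tsc th s o) (1 : R) != 0.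
      by apply: contraNneq T0 => e; rewrite -fc e mul0r.
    by rewrite -fc; field.
  by rewrite log2V ?(log2X R 1) ?expr1 //; lra.
transitivity (prob (P0 tsc) (fun o => (tquery th s o.1 != [ffun => 0]) && predT o.2)).
  rewrite /prob [RHS]big_mkcond -sumrN; apply: eq_bigr => o _ /=.
  by case: ifP => _ /=; rewrite ?mulr0 ?oppr0 // mulrN1 opprK.
rewrite (@M1 _ _ _ _ tsc (fun f => tquery th s f != [ffun => 0]) predT).
rewrite (cnt_ext predT (fun W => true)) // /cnt totW divff // mulr1.
case: vd => _ /=; rewrite (bigID (fun f => tquery th s f == [ffun => 0])) /= sum_tquery.
by move=> h; rewrite -h addrC addrK.
Qed.

End TSC.

Lemma geo (R : realType) (x : R) (K : nat) : 0 < x ->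
  (\sum_(i < K) x ^- i) * (x - 1) = x * (1 - (x ^+ K)^-1).
Proof.
move=> x0; elim: K => [|K IH]; first by rewrite big_ord0 expr0 invr1 subrr mulr0 mul0r.
rewrite big_ord_recr /= mulrDl IH exprSr.
have y0 : x ^+ K != 0 by rewrite expf_neq0 // gt_eqF.
by field; rewrite y0 gt_eqF.
Qed.

Lemma sum_geo_ge1 (R : realType) (x : R) (K : nat) : (0 < K)%N -> 0 < x ->
  1 <= \sum_(i < K) x ^- i.
Proof.
move=> K0 x0; rewrite (bigD1 (Ordinal K0)) //= expr0 invr1 lerDl.
by apply: sumr_ge0 => i _; rewrite invr_ge0 exprn_ge0 // ltW.
Qed.

Lemma tsc_achievable (R : realType) (n K : nat) : (0 < K)%N ->
  achievable K n.+2 ((\sum_(i < K) ((n.+2)%:R : R) ^- i)^-1).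
Proof.
move=> K0; exists n.+1, (tsc R n K); split => //.
- exact: tsc_valid.
- exact: tsc_correct.
- exact: tsc_private.
move=> th.
have -> : download (tsc R n K) th = (1 - cF R n K) *+ n.+2.
  rewrite /download (eq_bigr (fun _ => 1 - cF R n K)); last by move=> s _; exact: tsc_condH.
  by rewrite sumr_const card_ord.
have x0 : 0 < ((n.+2)%:R : R) by rewrite ltr0n.
have g := geo _ _ K x0.
have s1 := sum_geo_ge1 _ _ _ K0 x0.
rewrite -[(1 - cF R n K) *+ n.+2]mulr_natl /cF -g.
have -> : ((n.+2)%:R : R) - 1 = n.+1%:R by rewrite -natr1 addrK.
rewrite mulrA mulVf ?mul1r //; lra.
Qed.

Section One.
Variables (R : realType) (K : nat).
Local Notation Wsp := {ffun 'I_K -> 1.-tuple bool}.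

Definition one_sc : pir_scheme R K 1 1 :=
  @PirScheme R K 1 1 unit (fun _ => 1) unit Wsp (fun _ _ _ => tt) (fun _ _ W => W).

Lemma one_valid : valid_dist one_sc.
Proof. by split => [f|]; rewrite /= ?ler01 // sumr_const card_unit. Qed.

Lemma one_correct : correct one_sc.
Proof.
move=> th; exists (fun (q : {ffun 'I_1 -> unit}) (a : {ffun 'I_1 -> Wsp}) => (a ord0) th) => o _.
by rewrite /Aall /A !ffunE.
Qed.

Lemma one_private : private one_sc.
Proof. by move=> s k k' q a w. Qed.

Lemma one_condH th s :
  cond_entropy (P0 one_sc) (A one_sc th s) (Qall one_sc th) = K%:R.
Proof.
have vd := one_valid.
have Pge := @PPge0 _ _ _ _ one_sc vd.
have -> : cond_entropy (P0 one_sc) (A one_sc th s) (Qall one_sc th) =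
          cond_entropy (P0 one_sc) (A one_sc th s) (fun o => ((fun _ : Wsp => tt) o.2, Qall one_sc th o)).
  rewrite /cond_entropy; congr (_ - _); apply: (ent_congr_all _ _ _ Pge) => o o';
    by rewrite !xpair_eqE eqxx.
rewrite (condH_ratio _ _ _ Pge).
have T0 : (2 : R) ^+ K != 0 by rewrite expf_neq0 // pnatr_eq0.
transitivity (- \sum_o P0 one_sc o * (- K%:R)); last first.
  by rewrite -mulr_suml (@PPsum _ _ _ _ one_sc vd) mul1r opprK.
congr (- _); apply: eq_bigr => o _.
case: (Pcase _ _ _ Pge o) => [->|Po]; first by rewrite !mul0r.
rewrite (@condH_prod _ _ _ _ one_sc vd _ _ _ (A one_sc th s) (fun f => [ffun s : 'I_1 => tt])
   (fun _ => tt) (fun q W => W)) //.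
have -> : cnt R K 1 (fun W => (W == A one_sc th s o) && (tt == tt)) = 1.
  by rewrite /cnt (eq_bigl (fun W => W == o.2)) ?big_pred1_eq // => W; rewrite andbT.
have -> : cnt R K 1 (fun W => tt == tt) = 2 ^+ K.
  by rewrite /cnt (eq_bigl predT) // totW muln1.
by rewrite mul1r log2V ?log2X // exprn_gt0 //; lra.
Qed.

Lemma one_achievable : (0 < K)%N ->
  achievable K 1 ((\sum_(i < K) ((1%:R : R) ^- i))^-1).
Proof.
move=> K0; exists 1%N, one_sc; split.
- by [].
- exact: one_valid.
- exact: one_correct.
- exact: one_private.
move=> th; rewrite /download big_ord1 one_condH.
have -> : \sum_(i < K) (1%:R : R) ^- i = K%:R.
  by rewrite (eq_bigr (fun _ => 1)) ?sumr_const ?card_ord // => i _; rewrite expr1n invr1.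
by rewrite mulVf // pnatr_eq0 -lt0n.
Qed.

End One.

Theorem theorem1 (R : realType) (N U K : nat) :
  (1 <= N)%N -> (1 <= U)%N -> (1 <= K)%N ->
  is_capacity K (N + U - 1)
    ((\sum_(i < K) ((N + U - 1)%:R : R) ^- i)^-1).
Proof.
move=> N1 U1 K1.
have S0 : (0 < N + U - 1)%N.
  case: N N1 => // N' _.
  by rewrite addSn subSS subn0 addn_gt0 U1 orbT.
split.
  by move=> r; apply: converse.
move=> e e0.
exists ((\sum_(i < K) ((N + U - 1)%:R : R) ^- i)^-1); split; last first.
  by rewrite ltrBlDr ltrDl.
move: S0; case: (N + U - 1)%N => [|[|n]] // _.
  exact: one_achievable.
exact: tsc_achievable.
Qed.
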